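(* The map $\phi$ from nonempty faces of $V_0$ to $\mathcal{SC}(\mathcal M)$ is injective and order-preserving: if $F_1\subseteq F_2$ are faces of $V_0$, then $\phi(F_1)\le\phi(F_2)$.
   Context: Let $\mathcal M$ be a regular matroid on a finite ground set $E$, represented by a totally unimodular matrix $M$ with columns $c_e$; $\mathcal F=\ker M\subseteq\mathbb R^E$ with Euclidean inner product, $\Lambda=\ker M\cap\mathbb Z^E$, $V_0=\{x\in\mathcal F:\|x\|\le\|x-\mu\|\ \forall\mu\in\Lambda\}$. A circuit in $\Lambda$ is a flow with coordinates in $\{-1,0,1\}$ whose support is a circuit (minimal dependent set of columns) of $\mathcal M$; $\Xi$ is the set of these. For $\gamma\in\Xi$, $F_\gamma=\{x\in\mathcal F:2\langle x,\gamma\rangle=\|\gamma\|^2\}$. An oriented submatroid is $(S,\varepsilon)$, $S\subseteq E$, $\varepsilon:S\to\{\pm1\}$; it is strongly connected if for every $e\in S$ there is $w\in\mathbb Z_{\ge0}^S$ with $w_e\ge1$ and $\sum_{f\in S}w_f\varepsilon_fc_f=0$. $\mathcal{SC}(\mathcal M)$ is the set of these, ordered by $(S,\varepsilon)\le(S',\varepsilon')$ iff $S'\subseteq S$ and $\varepsilon'=\varepsilon|_{S'}$. For a nonempty face $F$ of $V_0$, $\mathcal U(F)=\{\gamma\in\Xi:F\subseteq F_\gamma\}$ and $\phi(F)=(S,\varepsilon)$ with $S=\bigcup_{\gamma\in\mathcal U(F)}\operatorname{supp}\gamma$ and $\varepsilon_e=\operatorname{sgn}\gamma_e$ for any $\gamma\in\mathcal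 U(F)$ with $e\in\operatorname{supp}\gamma$ (well defined). *)

(* Defs.v *)
From HB Require Import structures.
From mathcomp Require Import all_boot all_order all_algebra.
From mathcomp Require Import boolp reals.
From Stdlib Require Import ClassicalEpsilon.
Set Implicit Arguments. Unset Strict Implicit. Unset Printing Implicit Defensive.
Import Order.TTheory GRing.Theory Num.Theory.
Local Open Scope ring_scope.

Section Defs.
Variables (R : realType) (m n : nat) (M : 'M[R]_(m, n)).

Definition totally_unimodular : Prop :=
  forall (k : nat) (f : 'I_k -> 'I_m) (g : 'I_k -> 'I_n),
    \det (mxsub f g M) \in [:: -1; 0; 1].

Definition dot (x y : 'cV[R]_n) : R := \sum_i x i 0 * y i 0.

Definition inF (x : 'cV[R]_n) : Prop := M *m x = 0.

Definition inLambda (mu : 'cV[R]_n) : Prop :=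
  inF mu /\ forall i, mu i 0 \is a Num.int.

Definition V0 (x : 'cV[R]_n) : Prop :=
  inF x /\ forall mu, inLambda mu -> dot x x <= dot (x - mu) (x - mu).

(* nonempty faces of V_0: intersections of V_0 with supporting hyperplanes
   (the choice a = 0, b = 0 gives V_0 itself) *)
Definition nonempty_face (Fc : 'cV[R]_n -> Prop) : Prop :=
  (exists x, Fc x) /\
  exists (a : 'cV[R]_n) (b : R),
    (forall x, V0 x -> dot a x <= b) /\
    (forall x, Fc x <-> (V0 x /\ dot a x = b)).

Definition supp (x : 'cV[R]_n) : {set 'I_n} := [set i | x i 0 != 0].

Definition dependent (S : {set 'I_n}) : Prop :=
  exists x : 'cV[R]_n, x != 0 /\ M *m x = 0 /\ supp x \subset S.

Definition matroid_circuit (S : {set 'I_n}) : Prop :=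
  dependent S /\ forall T : {set 'I_n}, T \proper S -> ~ dependent T.

Definition Xi (g : 'cV[R]_n) : Prop :=
  inLambda g /\ (forall i, g i 0 \in [:: -1; 0; 1]) /\ matroid_circuit (supp g).

Definition Fgamma (g x : 'cV[R]_n) : Prop := inF x /\ 2 * dot x g = dot g g.

Definition U (Fc : 'cV[R]_n -> Prop) (g : 'cV[R]_n) : Prop :=
  Xi g /\ forall x, Fc x -> Fgamma g x.

(* oriented submatroids (S, eps): eps is only meaningful on S *)
Definition osm := ({set 'I_n} * ('I_n -> R))%type.

Definition osm_eq (p q : osm) : Prop :=
  p.1 = q.1 /\ forall e, e \in p.1 -> p.2 e = q.2 e.

Definition osm_le (p q : osm) : Prop :=
  q.1 \subset p.1 /\ forall e, e \in q.1 -> q.2 e = p.2 e.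

Definition phiS (Fc : 'cV[R]_n -> Prop) : {set 'I_n} :=
  [set e | `[< exists g, U Fc g /\ e \in supp g >]].

Definition phiEps (Fc : 'cV[R]_n -> Prop) (e : 'I_n) : R :=
  Num.sg ((epsilon (inhabits (0 : 'cV[R]_n))
             (fun g => U Fc g /\ e \in supp g)) e 0).

Definition phi (Fc : 'cV[R]_n -> Prop) : osm := (phiS Fc, phiEps Fc).

End Defs.

(* Main.v *)
Require Import Defs.
From HB Require Import structures.
From mathcomp Require Import all_boot all_order all_algebra.
From mathcomp Require Import boolp reals ring lra.
From Stdlib Require Import ClassicalEpsilon.
Import Order.TTheory GRing.Theory Num.Theory.
Local Open Scope ring_scope.
Set Implicit Arguments. Unset Strict Implicit. Unset Printing Implicit Defensive.

Section Basics.
Variables (R : realType) (m n : nat) (M : 'M[R]_(m, n)).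
Implicit Types (x y z mu : 'cV[R]_n).

Definition l1 (x : 'cV[R]_n) : R := \sum_i `|x i 0|.
Definition pm1 (x : 'cV[R]_n) : Prop := forall i, x i 0 \in [:: -1; 0; 1].

Lemma dotC x y : dot x y = dot y x.
Proof. by apply: eq_bigr => i _; rewrite mulrC. Qed.

Lemma dotDr x y z : dot x (y + z) = dot x y + dot x z.
Proof. by rewrite /dot -big_split; apply: eq_bigr => i _; rewrite !mxE mulrDr. Qed.

Lemma dotNr x y : dot x (- y) = - dot x y.
Proof. by rewrite /dot -sumrN; apply: eq_bigr => i _; rewrite !mxE mulrN. Qed.

Lemma dotBr x y z : dot x (y - z) = dot x y - dot x z.
Proof. by rewrite dotDr dotNr. Qed.

Lemma dotZr x a y : dot x (a *: y) = a * dot x y.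
Proof. by rewrite /dot mulr_sumr; apply: eq_bigr => i _; rewrite !mxE mulrCA. Qed.

Lemma dot0r x : dot x 0 = 0.
Proof. by rewrite /dot big1 // => i _; rewrite mxE mulr0. Qed.

Lemma dotDl x y z : dot (y + z) x = dot y x + dot z x.
Proof. by rewrite dotC dotDr !(dotC x). Qed.
Lemma dotBl x y z : dot (y - z) x = dot y x - dot z x.
Proof. by rewrite dotC dotBr !(dotC x). Qed.
Lemma dotZl x a y : dot (a *: y) x = a * dot y x.
Proof. by rewrite dotC dotZr dotC. Qed.

Lemma dot_sumr (I : finType) (P : pred I) (F : I -> 'cV[R]_n) x :
  dot x (\sum_(i | P i) F i) = \sum_(i | P i) dot x (F i).
Proof.
elim/big_rec2: _ => [|i a b _ H]; first by rewrite dot0r.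
by rewrite dotDr H.
Qed.

Lemma V0E x : V0 M x <-> inF M x /\ forall mu, inLambda M mu -> 2 * dot x mu <= dot mu mu.
Proof.
have E mu : dot (x - mu) (x - mu) = dot x x - 2 * dot x mu + dot mu mu.
  rewrite dotBl !dotBr (dotC mu x); lra.
split=> -[Fx H]; split=> // mu /H; rewrite E; lra.
Qed.

Lemma inFD x y : inF M x -> inF M y -> inF M (x + y).
Proof. by rewrite /inF mulmxDr => -> ->; rewrite addr0. Qed.
Lemma inFN x : inF M x -> inF M (- x).
Proof. by rewrite /inF mulmxN => ->; rewrite oppr0. Qed.
Lemma inFB x y : inF M x -> inF M y -> inF M (x - y).
Proof. by move=> ? ?; apply: inFD => //; apply: inFN. Qed.
Lemma inFZ a x : inF M x -> inF M (a *: x).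
Proof. by rewrite /inF -scalemxAr => ->; rewrite scaler0. Qed.
Lemma inF0 : inF M 0.
Proof. by rewrite /inF mulmx0. Qed.

Lemma inLD x y : inLambda M x -> inLambda M y -> inLambda M (x + y).
Proof.
move=> [Fx Ix] [Fy Iy]; split; first exact: inFD.
by move=> i; rewrite mxE rpredD.
Qed.
Lemma inLB x y : inLambda M x -> inLambda M y -> inLambda M (x - y).
Proof.
move=> [Fx Ix] [Fy Iy]; split; first exact: inFB.
by move=> i; rewrite !mxE rpredB.
Qed.

Lemma pm1_int x : pm1 x -> forall i, x i 0 \is a Num.int.
Proof.
move=> H i; move: (H i); rewrite !inE => /or3P[] /eqP ->.
- by rewrite rpredN; exact: rpred1.
- exact: rpred0.
- exact: rpred1.
Qed.

Lemma pm1_sq (a : R) : a \in [:: -1; 0; 1] -> a * a = `|a|.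
Proof.
by rewrite !inE => /or3P[] /eqP ->; rewrite ?normrN ?normr1 ?normr0 ?mulr0 ?mulr1 ?mulrNN ?mulr1.
Qed.

Lemma pm1_dot x : pm1 x -> dot x x = l1 x.
Proof. by move=> H; apply: eq_bigr => i _; rewrite pm1_sq. Qed.

Lemma int_le_sq (a : R) : a \is a Num.int -> `|a| <= a * a.
Proof.
move=> Ia; have [->|a0] := eqVneq a 0; first by rewrite normr0 mulr0.
have h := norm_intr_ge1 Ia a0.
have e : a * a = `|a| * `|a|.
  by rewrite -normrM ger0_norm // -expr2 sqr_ge0.
rewrite e; nra.
Qed.

Lemma l1_le_dot x : (forall i, x i 0 \is a Num.int) -> l1 x <= dot x x.
Proof. by move=> H; apply: ler_sum => i _; apply: int_le_sq. Qed.

Lemma l1_ge0 x : 0 <= l1 x.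
Proof. by apply: sumr_ge0 => i _. Qed.

End Basics.

Section TU.
Variables (R : realType) (m n : nat) (M : 'M[R]_(m, n)).
Hypothesis HTU : totally_unimodular M.
Implicit Types (x y z mu : 'cV[R]_n).

Lemma nz_entry p (x : 'cV[R]_p) : x != 0 -> exists i, x i 0 != 0.
Proof.
move=> x0; case: (pickP (fun i => x i 0 != 0)) => [i Hi|H]; first by exists i.
move: x0; have -> : x = 0; last by rewrite eqxx.
by apply/matrixP => i j; rewrite (ord1 j) mxE; move: (H i) => /negbFE/eqP.
Qed.

Lemma pm1N (a : R) : a \in [:: -1; 0; 1] -> - a \in [:: -1; 0; 1].
Proof. by rewrite !inE => /or3P[] /eqP ->; rewrite ?opprK ?oppr0 eqxx ?orbT. Qed.

Lemma tu_scale y : inF M y -> matroid_circuit M (supp y) ->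
  exists c : R, 0 < c /\ pm1 (c *: y).
Proof.
move=> Fy [[x [x0 [Mx sx]]] minT].
set T := supp y.
have [e0 e0T] : exists e0, e0 \in T.
  have [i xi] := nz_entry x0; exists i; apply: (subsetP sx); by rewrite inE.
have ye0 : y e0 0 != 0 by move: e0T; rewrite inE.
set T0 := T :\ e0.
pose g := fun j : 'I_#|T0| => (enum_val j : 'I_n).
have gT0 j : g j \in T0 by apply: enum_valP.
have ginj : injective g by apply: enum_val_inj.
pose A := colsub g M.
pose G := \matrix_(e, j) ((g j == e)%:R : R) : 'M_(n, #|T0|).
have MG : M *m G = A.
  apply/matrixP=> r j; rewrite !mxE (bigD1 (g j)) //= big1 => [|e /negbTE ne].
    by rewrite !mxE eqxx mulr1 addr0.
  by rewrite !mxE eq_sym ne mulr0.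
have Gg (v : 'cV_#|T0|) j : (G *m v) (g j) 0 = v j 0.
  rewrite !mxE (bigD1 j) //= big1 => [|k /negbTE nk].
    by rewrite !mxE eqxx mul1r addr0.
  by rewrite !mxE (inj_eq ginj) nk mul0r.
have Gout (v : 'cV_#|T0|) e : e \notin T0 -> (G *m v) e 0 = 0.
  move=> eT; rewrite !mxE big1 // => j _; rewrite !mxE.
  have -> : (g j == e) = false by apply/eqP => ge; move: eT; rewrite -ge gT0.
  by rewrite mul0r.
have kerA : forall v : 'cV_#|T0|, A *m v = 0 -> v = 0.
  move=> v Av; have [//|vn] := eqVneq v 0; exfalso.
  apply: (minT T0); first exact: properD1.
  exists (G *m v); split; last split.
  - have [j vj] := nz_entry vn.
    apply/eqP => G0; move: vj; by rewrite -Gg G0 mxE eqxx.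
  - by rewrite /inF mulmxA MG.
  - apply/subsetP => e; rewrite inE; apply: contraR => eT; by rewrite Gout.
have rfA : row_full A.
  have : row_free A^T.
    rewrite -kermx_eq0; apply/eqP/row_matrixP => i; rewrite row0.
    have K0 : kermx A^T *m A^T = 0 by apply/sub_kermxP; exact: submx_refl.
    have : row i (kermx A^T) *m A^T = 0 by rewrite -row_mul K0 row0.
    move=> /(congr1 trmx); rewrite trmx_mul trmxK trmx0 => /kerA H.
    by rewrite -[row _ _]trmxK H trmx0.
  by rewrite /row_free /row_full mxrank_tr.
pose f := fullrankfun rfA.
pose B := rowsub f A.
have BE : B = mxsub f g M by apply/matrixP => i j; rewrite !mxE.
have Bu : B \in unitmx := fullrowsub_unit rfA.
have detB : \det B * \det B = 1.
  have : \det B \in [:: -1; 0; 1] by rewrite BE; apply: HTU.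
  move: Bu; rewrite unitmxE unitfE => Bn.
  rewrite !inE => /or3P[] /eqP dB; move: Bn; rewrite dB ?eqxx // => _.
  - by rewrite mulrNN mulr1.
  - by rewrite mulr1.
pose b := \col_i M (f i) e0.
pose v := \col_j y (g j) 0.
have Bv : B *m v = - y e0 0 *: b.
  apply/matrixP => i k; rewrite (ord1 k) !mxE.
  have : (M *m y) (f i) 0 = 0 by rewrite Fy mxE.
  rewrite mxE (bigD1 e0) //= => /eqP; rewrite addrC addr_eq0 => /eqP H.
  rewrite mulNr mulrC -H; symmetry.
  rewrite (bigID (fun e => e \in T0)) /= [X in _ + X]big1 ?addr0; last first.
    move=> e /andP[ne eT0]; have : e \notin T by rewrite in_setD1 ne andTb in eT0.
    by rewrite inE negbK => /eqP ->; rewrite mulr0.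
  rewrite (eq_bigl (fun e => e \in T0)); last first.
    by move=> e; rewrite in_setD1 andb_idl // => /andP[].
  rewrite big_enum_val /=; apply: eq_bigr => j _; by rewrite !mxE.
pose u := (- (y e0 0)^-1) *: v.
have Bu' : B *m u = b.
  by rewrite /u -scalemxAr Bv scalerA mulrNN mulVf // scale1r.
have key j : \det B * u j 0 \in [:: -1; 0; 1].
  have := congr1 (mulmx (\adj B)) Bu'.
  rewrite mulmxA mul_adj_mx mul_scalar_mx => /matrixP /(_ j 0).
  rewrite !mxE => ->.
  pose g' := fun l : 'I_#|T0| => if l == j then e0 else g l.
  have -> : \sum_j0 \adj B j j0 * b j0 0 = \det (mxsub f g' M); last exact: HTU.
  rewrite (expand_det_col _ j); apply: eq_bigr => i _.
  rewrite !mxE /g' eqxx mulrC; congr (_ * _).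
  rewrite /cofactor; congr (_ * \det _).
  apply/matrixP => r s; rewrite !mxE.
  by have /negbTE -> : lift j s != j by rewrite eq_sym neq_lift.
have ue j : u j 0 \in [:: -1; 0; 1].
  have -> : u j 0 = \det B * (\det B * u j 0) by rewrite mulrA detB mul1r.
  have /orP[] : (\det B == 1) || (\det B == -1) by rewrite -sqrf_eq1 expr2 detB.
    by move/eqP => dB; have := key j; rewrite dB !mul1r.
  by move/eqP => dB; have := key j; rewrite dB !mulN1r => H; apply: pm1N.
exists (`|y e0 0|^-1); split; first by rewrite invr_gt0 normr_gt0.
move=> e; rewrite mxE.
have [->|ne] := eqVneq e e0.
  have [yp|yn|yz] := ltrgt0P (y e0 0).
  - by rewrite mulVf // !inE eqxx !orbT.
  - by rewrite invrN mulNr mulVf // !inE eqxx.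
  - by move: ye0; rewrite yz eqxx.
have [eT0|eT0] := boolP (e \in T0).
  pose j := enum_rank_in eT0 e.
  have gj : g j = e by exact: enum_rankK_in.
  have uj : u j 0 = - (y e0 0)^-1 * y e 0 by rewrite !mxE gj.
  have := ue j; rewrite uj.
  have [yp|yn|yz] := ltrgt0P (y e0 0).
  - by rewrite mulNr => /pm1N; rewrite opprK.
  - by rewrite invrN.
  - by move: ye0; rewrite yz eqxx.
have : e \notin T by rewrite in_setD1 ne andTb in eT0.
by rewrite inE negbK => /eqP ->; rewrite mulr0 !inE eqxx !orbT.
Qed.

End TU.

Section Circ.
Variables (R : realType) (m n : nat) (M : 'M[R]_(m, n)).
Hypothesis HTU : totally_unimodular M.
Implicit Types (x y z mu : 'cV[R]_n).

Definition conf (u v : 'cV[R]_n) :=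
  forall i, 0 <= u i 0 * v i 0 /\ (v i 0 = 0 -> u i 0 = 0).

Lemma conf_refl u : conf u u.
Proof. by move=> i; split => //; rewrite -expr2 sqr_ge0. Qed.

Lemma conf_trans u v w : conf u v -> conf v w -> conf u w.
Proof.
move=> H1 H2 i; have [h1 z1] := H1 i; have [h2 z2] := H2 i.
split; last by move=> /z2 /z1.
have [vp|vn|vz] := ltrgt0P (v i 0).
- have : 0 <= u i 0 by nra.
  have : 0 <= w i 0 by nra.
  nra.
- have : u i 0 <= 0 by nra.
  have : w i 0 <= 0 by nra.
  nra.
- by rewrite (z1 vz) mul0r.
Qed.

Lemma shrink y z e0 : supp z \subset supp y -> 0 < z e0 0 * y e0 0 ->
  exists t : R, conf (y - t *: z) y /\
     exists es, y es 0 != 0 /\ (y - t *: z) es 0 = 0.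
Proof.
move=> szy P0.
pose P := fun e => 0 < z e 0 * y e 0.
pose F := fun e => y e 0 / z e 0.
have P0' : P e0 by [].
case: (@arg_minP _ _ _ e0 P F P0') => es Pes Hmin.
rewrite /P in Pes.
have zs : z es 0 != 0 by apply/eqP => zz; move: Pes; rewrite zz mul0r ltxx.
have ys : y es 0 != 0 by apply/eqP => yz; move: Pes; rewrite yz mulr0 ltxx.
have tpos : 0 < F es.
  rewrite /F; have -> : y es 0 / z es 0 = (z es 0 * y es 0) / (z es 0 ^+ 2).
    by field.
  by apply: divr_gt0 => //; rewrite exprn_even_gt0.
exists (F es); split; last first.
  exists es; split => //; rewrite !mxE /F; field; exact: zs.
move=> i; rewrite !mxE; split; last first.
  move=> yi; have : i \notin supp y by rewrite inE yi eqxx negbK.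
  move/(contra (subsetP szy i)); rewrite inE negbK => /eqP ->.
  by rewrite yi mulr0 subr0.
have [Pi|nPi] := boolP (P i).
  have := Hmin i Pi; rewrite /P in Pi; rewrite /F => le.
  have zi : z i 0 != 0 by apply/eqP => zz; move: Pi; rewrite zz mul0r ltxx.
  have e : y i 0 = (y i 0 / z i 0) * z i 0 by field.
  set a := y es 0 / z es 0 in le tpos *.
  set q := y i 0 / z i 0 in le e.
  rewrite e; rewrite e in Pi.
  have -> : (q * z i 0 - a * z i 0) * (q * z i 0) = (q - a) * (q * (z i 0 * z i 0)) by ring.
  have eP : z i 0 * (q * z i 0) = q * (z i 0 * z i 0) by ring.
  rewrite eP in Pi.
  by apply: mulr_ge0; [rewrite subr_ge0 | apply: ltW].
rewrite /P -leNgt in nPi.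
have h : F es * (z i 0 * y i 0) <= 0 by rewrite pmulr_rle0.
have -> : (y i 0 - F es * z i 0) * y i 0 = y i 0 * y i 0 - F es * (z i 0 * y i 0) by ring.
have := sqr_ge0 (y i 0); rewrite expr2; lra.
Qed.

Lemma supp_scale (c : R) y : c != 0 -> supp (c *: y) = supp y.
Proof. by move=> c0; apply/setP => i; rewrite !inE mxE mulf_eq0 negb_or c0. Qed.

Lemma circuit_conf mu : inF M mu -> mu != 0 -> exists g, Xi M g /\ conf g mu.
Proof.
move=> Fmu mu0.
suff H : forall k y, (#|supp y| < k)%N -> inF M y -> y != 0 -> conf y mu ->
    exists g, Xi M g /\ conf g mu.
  by apply: (H _ mu (ltnSn _) Fmu mu0); exact: conf_refl.
elim=> [//|k IH] y sk Fy y0 cy.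
have [[T [pT dT]]|nd] := pselect (exists T : {set 'I_n}, T \proper supp y /\ dependent M T).
  case: dT => z [z0 [Mz szT]].
  have [e0 ze0] := nz_entry z0.
  have ye0 : y e0 0 != 0.
    have : e0 \in supp y.
      by apply: (subsetP (proper_sub pT)); apply: (subsetP szT); rewrite inE.
    by rewrite inE.
  have szy : supp z \subset supp y := subset_trans szT (proper_sub pT).
  have [z' [Fz' [sz' [sz'T P0]]]] : exists z', inF M z' /\ supp z' \subset supp y /\
       supp z' \subset T /\ 0 < z' e0 0 * y e0 0.
    have nz : z e0 0 * y e0 0 != 0 by rewrite mulf_neq0.
    have [pos|neg|zz] := ltrgt0P (z e0 0 * y e0 0).
    - by exists z.
    - exists (- z); rewrite -scaleN1r supp_scale ?oppr_eq0 ?oner_eq0 //.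
      split; first by apply: inFZ.
      by split => //; split => //; rewrite !mxE mulN1r mulNr oppr_gt0.
    - by move: nz; rewrite zz eqxx.
  have [t [cy' [es [yes y'es]]]] := shrink sz' P0.
  have [e [ey eT]] : exists e, e \in supp y /\ e \notin T.
    have [_ [e ey eT]] := properP pT; exists e; by split.
  have ze : z' e 0 = 0.
    apply/eqP; apply: contraNT eT => ze; apply: (subsetP sz'T); by rewrite inE.
  apply: (IH (y - t *: z')).
  - have ssub : supp (y - t *: z') \subset supp y :\ es.
      apply/subsetP => i; rewrite !inE => yi; apply/andP; split.
        by apply: contraNneq yi => ->; rewrite y'es.
      apply: contraNneq yi => yz; have [_ h] := cy' i.
      by rewrite (h yz).
    have le := subset_leq_card ssub.
    have c1 := cardsD1 es (supp y); rewrite inE yes /= in c1.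
    rewrite c1 add1n ltnS in sk; exact: leq_ltn_trans le sk.
  - by apply: inFB => //; apply: inFZ.
  - apply/eqP => /matrixP /(_ e 0); rewrite !mxE ze mulr0 subr0 => /eqP.
    by move: ey; rewrite inE => /negbTE ->.
  - exact: conf_trans cy' cy.
have circ : matroid_circuit M (supp y).
  split; first by exists y; split => //; split => //.
  by move=> T pT dT; apply: nd; exists T.
have [c [c0 pc]] := tu_scale HTU Fy circ.
exists (c *: y); split; last first.
  apply: conf_trans cy => i; rewrite !mxE; split.
    by rewrite -mulrA; apply: mulr_ge0; [exact: ltW | rewrite -expr2 sqr_ge0].
  by move=> ->; rewrite mulr0.
split; first by split; [apply: inFZ | apply: pm1_int].
split => //.
by rewrite supp_scale // gt_eqF.
Qed.

End Circ.

Section L1.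
Variables (R : realType) (m n : nat) (M : 'M[R]_(m, n)).
Hypothesis HTU : totally_unimodular M.
Implicit Types (x y z mu : 'cV[R]_n).

Definition Ccond x := forall c, inF M c -> pm1 c -> 2 * dot x c <= dot c c.

Lemma l1_split g mu : pm1 g -> conf g mu -> (forall i, mu i 0 \is a Num.int) ->
  l1 mu = l1 g + l1 (mu - g).
Proof.
move=> pg cg Im; rewrite /l1 -big_split; apply: eq_bigr => i _ /=.
rewrite !mxE; have [h z] := cg i; have Ii := Im i.
move: (pg i); rewrite !inE => /or3P[] /eqP gi; rewrite gi ?normr0 ?subr0 ?add0r //.
- have mn : mu i 0 != 0.
    by apply/eqP => m0; move: (z m0); rewrite gi; move/eqP; rewrite oppr_eq0 oner_eq0.
  have := norm_intr_ge1 Ii mn.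
  have mneg : mu i 0 < 0.
    move: h; rewrite gi mulN1r oppr_ge0 le_eqVlt (negbTE mn) /=; done.
  move=> h1; rewrite ltr0_norm // in h1; rewrite normrN normr1 ltr0_norm // ler0_norm; lra.
- have mn : mu i 0 != 0.
    by apply/eqP => m0; move: (z m0); rewrite gi; move/eqP; rewrite oner_eq0.
  have := norm_intr_ge1 Ii mn.
  have mpos : 0 < mu i 0.
    move: h; rewrite gi mul1r le_eqVlt eq_sym (negbTE mn) /=; done.
  move=> h1; rewrite gtr0_norm // in h1; rewrite normr1 gtr0_norm // ger0_norm; lra.
Qed.

Lemma Xi_l1 g : Xi M g -> 1 <= l1 g.
Proof.
move=> [_ [pg [[x [x0 [_ sx]]] _]]].
have [i xi] := nz_entry x0.
have : i \in supp g by apply: (subsetP sx); rewrite inE.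
rewrite inE => gi.
have : `|g i 0| = 1.
  move: (pg i) gi; rewrite !inE => /or3P[] /eqP ->; rewrite ?eqxx // ?normrN normr1 //.
rewrite /l1 (bigD1 i) //= => ->.
have : 0 <= \sum_(j | j != i) `|g j 0| by apply: sumr_ge0.
lra.
Qed.

Lemma l1_bound x : inF M x -> Ccond x ->
  forall mu, inLambda M mu -> 2 * dot x mu <= l1 mu.
Proof.
move=> Fx Cx mu Lmu.
suff H : forall N : nat, forall mu, inLambda M mu -> l1 mu <= N%:R -> 2 * dot x mu <= l1 mu.
  apply: (H (Num.Def.archi_bound (l1 mu))) => //.
  by apply: ltW; apply: archi_boundP; apply: l1_ge0.
clear mu Lmu; elim=> [|N IH] mu Lmu le.
  have [->|mu0] := eqVneq mu 0; first by rewrite dot0r mulr0 l1_ge0.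
  have [g [Xg _]] := circuit_conf HTU Lmu.1 mu0.
  have : 1 <= l1 mu.
    have [g' [Xg' cg']] := circuit_conf HTU Lmu.1 mu0.
    rewrite (l1_split Xg'.2.1 cg' Lmu.2); have := Xi_l1 Xg'; have := l1_ge0 (mu - g'); lra.
  move: le; rewrite /= => le; lra.
have [->|mu0] := eqVneq mu 0; first by rewrite dot0r mulr0 l1_ge0.
have [g [Xg cg]] := circuit_conf HTU Lmu.1 mu0.
have [[Fg Ig] [pg _]] := Xg.
have Lmg : inLambda M (mu - g) by apply: inLB => //; split.
have sp := l1_split pg cg Lmu.2.
have := Xi_l1 Xg => g1.
have IH' := IH (mu - g) Lmg.
have le' : l1 (mu - g) <= N%:R by move: le; rewrite sp -natr1; lra.
have {IH'} IH' := IH' le'.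
have Cg := Cx g Fg pg.
rewrite pm1_dot // in Cg.
have e : dot x mu = dot x g + dot x (mu - g) by rewrite -dotDr addrC subrK.
rewrite e sp; lra.
Qed.

Lemma V0_C x : V0 M x -> Ccond x.
Proof.
move=> /V0E [Fx H] c Fc pc; apply: H; split => //; exact: pm1_int.
Qed.

Lemma C_V0 x : inF M x -> Ccond x -> V0 M x.
Proof.
move=> Fx Cx; apply/V0E; split => // mu Lmu.
apply: le_trans (l1_bound Fx Cx Lmu) _; exact: l1_le_dot Lmu.2.
Qed.

Lemma l1_V0 x mu : V0 M x -> inLambda M mu -> 2 * dot x mu <= l1 mu.
Proof.
move=> Vx; apply: l1_bound; first by case: Vx.
exact: V0_C.
Qed.

Lemma signA x g g' e : V0 M x -> inLambda M g -> pm1 g -> 2 * dot x g = dot g g ->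
  inLambda M g' -> pm1 g' -> 2 * dot x g' = dot g' g' ->
  g e 0 != 0 -> g' e 0 != 0 -> g e 0 = g' e 0.
Proof.
move=> Vx Lg pg tg Lg' pg' tg' ge g'e.
apply/eqP; apply: contraT => ne.
have opp : g' e 0 = - g e 0.
  move: (pg e) (pg' e) ge g'e ne; rewrite !inE.
  by move=> /or3P[] /eqP -> /or3P[] /eqP ->; rewrite ?eqxx ?opprK ?oppr0.
have h := l1_V0 Vx (inLD Lg Lg').
rewrite dotDr mulrDr tg tg' !pm1_dot // in h.
have : l1 (g + g') < l1 g + l1 g'.
  rewrite /l1 -big_split (bigD1 e) //= [X in _ < X](bigD1 e) //=.
  apply: ltr_leD.
    rewrite !mxE opp subrr normr0 normrN.
    by rewrite -mulr2n mulrn_wgt0 // normr_gt0.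
  apply: ler_sum => i _; rewrite mxE; exact: ler_normD.
lra.
Qed.

End L1.

Section Faces.
Variables (R : realType) (m n : nat) (M : 'M[R]_(m, n)).
Hypothesis HTU : totally_unimodular M.
Implicit Types (x y z mu : 'cV[R]_n) (F : 'cV[R]_n -> Prop).

Lemma face_V0 F x : nonempty_face M F -> F x -> V0 M x.
Proof. by move=> [_ [a [b [_ H]]]] /H []. Qed.

Definition gam F e := epsilon (inhabits (0 : 'cV[R]_n)) (fun g => U M F g /\ e \in supp g).

Lemma gam_spec F e : e \in phiS M F -> U M F (gam F e) /\ e \in supp (gam F e).
Proof.
rewrite inE => /asboolP H; exact: (epsilon_spec (inhabits (0 : 'cV[R]_n)) _ H).
Qed.

Lemma pm1_sg (a : R) : a \in [:: -1; 0; 1] -> a != 0 -> Num.sg a = a.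
Proof.
rewrite !inE => /or3P[] /eqP ->; rewrite ?eqxx // => _.
- by rewrite sgrN sgr1.
- by rewrite sgr1.
Qed.

Lemma phi_spec F g e : nonempty_face M F -> U M F g -> g e 0 != 0 ->
  e \in phiS M F /\ phiEps M F e = g e 0.
Proof.
move=> fF Ug ge.
have eS : e \in phiS M F.
  by rewrite inE; apply/asboolP; exists g; split => //; rewrite inE.
split => //.
have [Ug0 eg0] := gam_spec eS.
rewrite /phiEps -/(gam F e).
have [[x Fx] _] := fF.
have Vx := face_V0 fF Fx.
have [[Lg [pg _]] Hg] := Ug.
have [[Lg0 [pg0 _]] Hg0] := Ug0.
have [_ tg] := Hg x Fx.
have [_ tg0] := Hg0 x Fx.
rewrite inE in eg0.
rewrite (signA HTU Vx Lg0 pg0 tg0 Lg pg tg eg0 ge).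
exact: pm1_sg.
Qed.

Lemma U_anti F1 F2 g : (forall x, F1 x -> F2 x) -> U M F2 g -> U M F1 g.
Proof. by move=> sub [Xg H]; split => // x /sub /H. Qed.

Lemma phi_mono F1 F2 : nonempty_face M F1 -> nonempty_face M F2 ->
  (forall x, F1 x -> F2 x) -> osm_le (phi M F1) (phi M F2).
Proof.
move=> f1 f2 sub; split.
  apply/subsetP => e; rewrite /= inE => /asboolP [g [Ug eg]].
  by rewrite inE; apply/asboolP; exists g; split => //; apply: U_anti Ug.
move=> e /= eS.
have [Ug eg] := gam_spec eS.
rewrite inE in eg.
have [_ ->] := phi_spec f2 Ug eg.
have [_ ->] := phi_spec f1 (U_anti sub Ug) eg.
done.
Qed.

End Faces.

Section Tight.
Variables (R : realType) (m n : nat) (M : 'M[R]_(m, n)).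
Hypothesis HTU : totally_unimodular M.
Implicit Types (x y z mu c : 'cV[R]_n) (F : 'cV[R]_n -> Prop).

Lemma conf_pm1 g c i : pm1 g -> pm1 c -> conf g c ->
  (c - g) i 0 = if g i 0 == 0 then c i 0 else 0.
Proof.
move=> pg pc cg; rewrite !mxE; have [h z] := cg i.
have [->|gn] := eqVneq (g i 0) 0; first by rewrite subr0.
have cn : c i 0 != 0 by apply: contra_neq gn => /z.
move: (pg i) (pc i) h gn cn; rewrite !inE.
move=> /or3P[] /eqP -> /or3P[] /eqP ->; rewrite ?eqxx //= ?subrr //; lra.
Qed.

Lemma tight_conf F c : nonempty_face M F -> inF M c -> pm1 c ->
  (forall x, F x -> 2 * dot x c = dot c c) ->
  forall e, c e 0 != 0 -> e \in phiS M F /\ phiEps M F e = c e 0.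
Proof.
move=> fF.
suff H : forall k c, (#|supp c| < k)%N -> inF M c -> pm1 c ->
  (forall x, F x -> 2 * dot x c = dot c c) ->
  forall e, c e 0 != 0 -> e \in phiS M F /\ phiEps M F e = c e 0.
  by move=> Fc pc; apply: (H _ c (ltnSn _)).
elim=> [//|k IH] {}c sk Fc pc tc e ce.
have c0 : c != 0 by apply: contra_neq ce => ->; rewrite mxE.
have [g [Xg cg]] := circuit_conf HTU Fc c0.
have [[Fg Ig] [pg _]] := Xg.
have Lc : inLambda M c by split => //; exact: pm1_int.
have sp := l1_split pg cg Lc.2.
have Ug : U M F g.
  split => // x Fx; split; first by case: (face_V0 fF Fx).
  have Vx := face_V0 fF Fx.
  have h1 := V0_C Vx Fg pg.
  have h2 := l1_V0 HTU Vx (inLB Lc (conj Fg Ig)).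
  have h3 := tc x Fx.
  rewrite dotBr in h2; rewrite !pm1_dot // in h1 h3 *.
  lra.
have [ge|ge] := eqVneq (g e 0) 0; last first.
  have [eS ->] := phi_spec HTU fF Ug ge; split => //.
  have [h z] := cg e.
  move: (pg e) (pc e) h ge ce; rewrite !inE.
  by move=> /or3P[] /eqP -> /or3P[] /eqP ->; rewrite ?eqxx //=; lra.
have cgE i := conf_pm1 i pg pc cg.
have pcg : pm1 (c - g).
  by move=> i; rewrite cgE; case: ifP => _; rewrite ?pc // !inE eqxx orbT.
have [i gi] : exists i, g i 0 != 0.
  apply: nz_entry; apply/eqP => g0; have := Xi_l1 Xg; rewrite g0.
  rewrite /l1 big1 ?ler10 // => j _; by rewrite mxE normr0.
have sub : supp (c - g) \proper supp c.
  apply/properP; split.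
    apply/subsetP => j; rewrite !inE cgE; case: ifP => // _; by rewrite eqxx.
  exists i; first by rewrite inE; have [_ z] := cg i; apply: contra_neq gi => /z.
  by rewrite inE cgE (negbTE gi) eqxx.
have H := IH (c - g) (leq_trans (proper_card sub) sk) (inFB Fc Fg) pcg.
have ce' : (c - g) e 0 = c e 0 by rewrite cgE ge eqxx.
rewrite -ce'; apply: H; last by rewrite ce'.
move=> x Fx.
rewrite dotBr mulrBr tc // !pm1_dot // sp.
have Vx := face_V0 fF Fx.
have [_ tg] := Ug.2 x Fx.
rewrite tg pm1_dot //; lra.
Qed.

Lemma conf_tight F c : nonempty_face M F -> inF M c -> pm1 c ->
  (forall e, c e 0 != 0 -> e \in phiS M F /\ phiEps M F e = c e 0) ->
  forall x, F x -> 2 * dot x c = dot c c.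
Proof.
move=> fF Fc pc hc x Fx.
have Vx := face_V0 fF Fx.
pose S := phiS M F.
pose eps' i := if i \in S then phiEps M F i else 0.
pose w : 'cV[R]_n := \col_i eps' i.
pose SC mu := forall i, eps' i * mu i 0 = `|mu i 0|.
have wl1 mu : SC mu -> dot w mu = l1 mu.
  by move=> h; apply: eq_bigr => i _; rewrite mxE h.
have Lpos mu : inLambda M mu -> SC mu -> 2 * dot x mu <= dot w mu.
  move=> Lm h; rewrite wl1 //. by have := l1_V0 HTU Vx Lm.
have eps1 i : `|eps' i| <= 1.
  rewrite /eps'; case: ifP => _; last by rewrite normr0 ler01.
  by rewrite /phiEps normr_sg; case: (_ != 0); rewrite ?ler01 ?lexx.
have gamSC e : e \in S -> SC (gam M F e).
  move=> eS i; have [Ug _] := gam_spec eS.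
  have [->|gi] := eqVneq (gam M F e i 0) 0; first by rewrite mulr0 normr0.
  have [iS ph] := phi_spec HTU fF Ug gi.
  by rewrite /eps' iS ph pm1_sq //; exact: Ug.1.2.1.
pose P := \sum_(e in S) gam M F e.
have LP : dot w P = 2 * dot x P.
  rewrite !dot_sumr mulr_sumr; apply: eq_bigr => e eS.
  have [Ug _] := gam_spec eS.
  rewrite wl1; last exact: gamSC.
  have [_ tg] := Ug.2 x Fx.
  by rewrite tg pm1_dot //; exact: Ug.1.2.1.
have LamP : inLambda M P.
  apply: (big_ind (inLambda M)).
  - by split; [exact: inF0 | move=> i; rewrite mxE rpred0].
  - by move=> a b; apply: inLD.
  - by move=> e eS; have [Ug _] := gam_spec eS; exact: Ug.1.1.
have Lc : inLambda M c by split => //; exact: pm1_int.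
have SCc : SC c.
  move=> i; have [->|ci] := eqVneq (c i 0) 0; first by rewrite mulr0 normr0.
  have [iS ph] := hc i ci.
  by rewrite /eps' iS ph pm1_sq.
have Pi i : eps' i * P i 0 = \sum_(e in S) `|gam M F e i 0|.
  rewrite summxE mulr_sumr; apply: eq_bigr => e eS; exact: gamSC.
have SCPc : SC (P - c).
  move=> i; rewrite !mxE.
  have [ci|ci] := eqVneq (c i 0) 0.
    rewrite ci subr0; apply/eqP; rewrite eq_le; apply/andP; split.
      apply: le_trans (ler_norm _) _; rewrite normrM.
      by apply: ler_piMl => //.
    by rewrite Pi summxE; exact: ler_norm_sum.
  have [iS ph] := hc i ci.
  have e1 : eps' i = c i 0 by rewrite /eps' iS ph.
  have [Ug ig] := gam_spec iS.
  have g1 : `|gam M F i i 0| = 1.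
    move: (Ug.1.2.1 i) ig; rewrite inE !inE => /or3P[] /eqP ->; rewrite ?eqxx //.
    by rewrite normrN normr1.
    by rewrite normr1.
  have sg1 : 1 <= \sum_(e in S) `|gam M F e i 0|.
    rewrite (bigD1 i) //= g1.
    have : 0 <= \sum_(e in S | e != i) `|gam M F e i 0| by apply: sumr_ge0.
    lra.
  have c1 : c i 0 * c i 0 = 1.
    by move: (pc i) ci; rewrite !inE => /or3P[] /eqP ->; rewrite ?eqxx // ?mulrNN mulr1.
  have nn : 0 <= eps' i * (P i 0 - c i 0).
    by rewrite mulrBr Pi e1 c1 subr_ge0.
  have ne1 : `|eps' i| = 1.
    rewrite e1; move: (pc i) ci; rewrite !inE => /or3P[] /eqP ->; rewrite ?eqxx //.
    by rewrite normrN normr1.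
    by rewrite normr1.
  by rewrite -[in RHS](mul1r `|_|) -ne1 -normrM ger0_norm.
have h1 := Lpos c Lc SCc.
have h2 := Lpos (P - c) (inLB LamP Lc) SCPc.
rewrite !dotBr in h2.
have := wl1 c SCc; rewrite -pm1_dot // => h3.
lra.
Qed.

End Tight.

Section Inj.
Variables (R : realType) (m n : nat) (M : 'M[R]_(m, n)).
Hypothesis HTU : totally_unimodular M.
Implicit Types (x y z mu c : 'cV[R]_n) (F : 'cV[R]_n -> Prop).

Definition vec (s : {ffun 'I_n -> 'I_3}) : 'cV[R]_n := \col_i ((s i : nat)%:R - 1).

Definition Lall : seq 'cV[R]_n := [seq vec s | s <- enum {ffun 'I_n -> 'I_3}].

Lemma pm1_Lall c : pm1 c -> c \in Lall.
Proof.
move=> pc.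
pose k i : nat := if c i 0 == -1 then 0%N else if c i 0 == 0 then 1%N else 2%N.
pose s : {ffun 'I_n -> 'I_3} := [ffun i => inord (k i)].
have -> : c = vec s.
  apply/matrixP => i j; rewrite (ord1 j) !mxE ffunE inordK; last first.
    by rewrite /k; case: ifP => _ //; case: ifP.
  rewrite /k; move: (pc i); rewrite !inE => /or3P[] /eqP ->.
  - by rewrite eqxx /=; rewrite sub0r.
  - have -> : (0 == -1 :> R) = false by apply/eqP => h; have : (0 : R) < 1 by []; lra.
    by rewrite eqxx subrr.
  - have -> : (1 == -1 :> R) = false by apply/eqP => h; have : (0 : R) < 1 by []; lra.
    by rewrite oner_eq0 -addn1 natrD addrK.
by apply: map_f; rewrite mem_enum.
Qed.

Lemma Ccond_avg x1 x2 : V0 M x1 -> V0 M x2 -> V0 M (2^-1 *: (x1 + x2)).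
Proof.
move=> V1 V2; apply: (C_V0 HTU).
  by apply: inFZ; apply: inFD; [case: V1 | case: V2].
move=> c Fc pc; have h1 := V0_C V1 Fc pc; have h2 := V0_C V2 Fc pc.
rewrite dotZl dotDl; lra.
Qed.

Lemma face_sub F1 F2 : nonempty_face M F1 -> nonempty_face M F2 ->
  osm_eq (phi M F1) (phi M F2) -> forall y, F1 y -> F2 y.
Proof.
move=> f1 f2 [eS eE] y F1y.
have Vy := face_V0 f1 F1y.
have f2' := f2.
case: f2' => [[x2 F2x2] [a [b [ab F2E]]]].
pose tight2 c := forall x, F2 x -> 2 * dot x c = dot c c.
have step1 : forall l : seq 'cV[R]_n, exists x0, F2 x0 /\
    forall c, c \in l -> inF M c -> pm1 c -> tight2 c \/ 2 * dot x0 c < dot c c.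
  elim=> [|c l [x0 [F2x0 H]]]; first by exists x2; split.
  have [[Fc [pc [nt ns]]]|hc] := pselect (inF M c /\ pm1 c /\ ~ tight2 c /\
                                        ~ (2 * dot x0 c < dot c c)); last first.
    exists x0; split => // c'; rewrite inE => /orP[/eqP -> Fc pc|/H //].
    case: (pselect (tight2 c)) => [|nt]; [by left|right].
    case: (pselect (2 * dot x0 c < dot c c)) => // ns.
    by exfalso; apply: hc.
  have [xc [F2xc nxc]] : exists xc, F2 xc /\ 2 * dot xc c != dot c c.
    apply: contrapT => hn; apply: nt => x Fx; apply/eqP; apply: contrapT => hx.
    by apply: hn; exists x; split => //; apply/negP.
  have Vxc : V0 M xc by apply: face_V0 f2 F2xc.
  have Vx0 : V0 M x0 by apply: face_V0 f2 F2x0.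
  have sxc : 2 * dot xc c < dot c c by rewrite lt_neqAle nxc /=; by have := V0_C Vxc Fc pc.
  exists (2^-1 *: (x0 + xc)); split.
    apply/F2E; split; first exact: Ccond_avg.
    have [_ e0] := (F2E x0).1 F2x0; have [_ e1] := (F2E xc).1 F2xc.
    rewrite dotZr dotDr e0 e1; lra.
  move=> c'; rewrite inE => /orP[/eqP -> _ _|/H h Fc' pc'].
    right; have := V0_C Vx0 Fc pc; rewrite dotZl dotDl; lra.
  have [//|s0] := h Fc' pc'; first by left.
  right; have := V0_C Vxc Fc' pc'; rewrite dotZl dotDl; lra.
have [x0 [F2x0 Hx0]] := step1 Lall.
have Vx0 : V0 M x0 by apply: face_V0 f2 F2x0.
have step2 c : inF M c -> pm1 c -> tight2 c -> 2 * dot y c = dot c c.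
  move=> Fc pc tc; apply: (conf_tight HTU f1 Fc pc) => // e ce.
  have [e2 p2] := tight_conf HTU f2 Fc pc tc ce.
  have e1 : e \in phiS M F1 by move: eS; rewrite /= => ->.
  by split => //; have := eE e e1; rewrite /= => ->.
pose zt t := x0 + t *: (x0 - y).
have step3 : forall l : seq 'cV[R]_n, exists t, 0 < t /\ forall s, 0 < s -> s <= t ->
    forall c, c \in l -> inF M c -> pm1 c -> 2 * dot (zt s) c <= dot c c.
  elim=> [|c l [t [t0 H]]]; first by exists 1; split.
  have [tc [tc0 Hc]] : exists tc, 0 < tc /\ forall s, 0 < s -> s <= tc ->
      inF M c -> pm1 c -> 2 * dot (zt s) c <= dot c c.
    have [Fc|nF] := pselect (inF M c); last by exists 1; split => // s _ _ /nF.
    have [pc|np] := pselect (pm1 c); last by exists 1; split => // s _ _ _ /np.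
    have h0 := V0_C Vx0 Fc pc.
    have hy := V0_C Vy Fc pc.
    have ez s : 2 * dot (zt s) c = 2 * dot x0 c + s * (2 * dot x0 c - 2 * dot y c).
      by rewrite /zt dotDl dotZl dotBl; ring.
    have [tc|sc] := Hx0 c (pm1_Lall pc) Fc pc.
      exists 1; split => // s _ _ _ _; rewrite ez (step2 c Fc pc tc) (tc x0 F2x0); lra.
    have [dle|dgt] := lerP (2 * dot x0 c - 2 * dot y c) 0.
      exists 1; split => // s s0 _ _ _; rewrite ez; nra.
    exists ((dot c c - 2 * dot x0 c) / (2 * dot x0 c - 2 * dot y c)); split.
      by apply: divr_gt0 => //; rewrite subr_gt0.
    move=> s s0 sle _ _; rewrite ez.
    rewrite ler_pdivlMr // in sle.
    lra.
  exists (Num.min t tc); split; first by rewrite lt_min t0 tc0.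
  move=> s s0; rewrite le_min => /andP[st stc] c'; rewrite inE => /orP[/eqP ->|/H]; last by apply.
  exact: Hc.
have [t [t0 Ht]] := step3 Lall.
have Vz : V0 M (zt t).
  apply: (C_V0 HTU).
    by apply: inFD; [case: Vx0 | apply: inFZ; apply: inFB; [case: Vx0 | case: Vy]].
  move=> c Fc pc; apply: (Ht t) => //; exact: pm1_Lall.
have az := ab _ Vz.
have ay := ab _ Vy.
have [_ ax0] := (F2E x0).1 F2x0.
apply/F2E; split => //.
move: az; rewrite /zt dotDr dotZr dotBr ax0 => az.
have : b <= dot a y by nra.
lra.
Qed.

End Inj.

Theorem mainTheorem14 (R : realType) (m n : nat) (M : 'M[R]_(m, n))
  (HTU : totally_unimodular M) :
  (forall F1 F2 : 'cV[R]_n -> Prop,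
     nonempty_face M F1 -> nonempty_face M F2 ->
     osm_eq (phi M F1) (phi M F2) -> forall x, F1 x <-> F2 x) /\
  (forall F1 F2 : 'cV[R]_n -> Prop,
     nonempty_face M F1 -> nonempty_face M F2 ->
     (forall x, F1 x -> F2 x) -> osm_le (phi M F1) (phi M F2)).
Proof.
split.
  move=> F1 F2 f1 f2 eq x; split; first exact: (face_sub HTU f1 f2 eq).
  apply: (face_sub HTU f2 f1).
  case: eq => eS eE; split; first by rewrite eS.
  move=> e; rewrite -eS => e1; by rewrite (eE e e1).
move=> F1 F2 f1 f2 sub; exact: (phi_mono HTU f1 f2 sub).
Qed.
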